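(* For every term $M$ of the distant Bang calculus $\mathtt{dBang}$, the set $\mathcal A(M)$ of Böhm approximants of $M$ is an ideal for the order $\sqsubseteq$, i.e. it is downward closed among approximants and directed: for all $A_1,A_2\in\mathcal A(M)$ there is $A_3\in\mathcal A(M)$ with $A_1\sqsubseteq A_3$ and $A_2\sqsubseteq A_3$.
   Context: \textbf{dBang.} Terms: $M,N ::= x \mid \lambda x.M \mid MN \mid M[N/x] \mid\ !M \mid \mathrm{der}\,M$, where $M[N/x]$ is an explicit substitution binding $x$ in $M$; terms up to $\alpha$-conversion, $M\{N/x\}$ capture-avoiding substitution. List contexts: $L ::= \square \mid L[N/x]$. Root rules: $L\langle\lambda x.M\rangle N \mapsto L\langle M[N/x]\rangle$; $M[L\langle !N\rangle/x]\mapsto L\langle M\{N/x\}\rangle$; $\mathrm{der}(L\langle !N\rangle)\mapsto L\langle N\rangle$. Full reduction $\to$ is their closure under arbitrary contexts. \textbf{Approximants.} Extend the syntax with a constant $\bot$. $A\sqsubseteq B$ means $A$ is obtained from $B$ by replacing some subterms by $\bot$. An approximant is a term of the extended syntax with no subterm of any of the forms $L\langle\lambda x.A\rangle B$, $L\langle\bot\rangle B$, $\mathrm{der}(L\langle !A\rangle)$, $\mathrm{der}(L\langle\bot\rangle)$, $A[L\langle !B\rangle/x]$, $A[L\langle\bot\rangle/x]$. $\mathcal A(M)=\{A\text{ approximant}\mid\exists N,\ M\to^*N,\ A\sqsubseteq N\}$. *)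

(* Defs.v *)
(* dBang terms with de Bruijn indices (alpha-conversion is
   built in), extended with the constant bot for approximants. *)
From Stdlib Require Import Arith List Relations.
Import ListNotations.

Inductive term : Type :=
| var  : nat -> term
| lam  : term -> term
| app  : term -> term -> term
| es   : term -> term -> term        (* es M N = M[N/x]; x is index 0 in M *)
| bang : term -> term
| der  : term -> term
| bot  : term.

Fixpoint bot_free (t : term) : Prop :=
  match t with
  | var _ => True
  | lam a | bang a | der a => bot_free a
  | app a b | es a b => bot_free a /\ bot_free b
  | bot => False
  end.

Fixpoint lift (k c : nat) (t : term) : term :=
  match t with
  | var n => if c <=? n then var (n + k) else var n
  | lam a => lam (lift k (S c) a)
  | app a b => app (lift k c a) (lift k c b)
  | es a b => es (lift k (S c) a) (lift k c b)
  | bang a => bang (lift k c a)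
  | der a => der (lift k c a)
  | bot => bot
  end.

(* subst d N t : capture-avoiding substitution of N for index d in t,
   decrementing the indices above d (the binder of d disappears). *)
Fixpoint subst (d : nat) (N : term) (t : term) : term :=
  match t with
  | var n => if n =? d then lift d 0 N
             else if d <? n then var (pred n) else var n
  | lam a => lam (subst (S d) N a)
  | app a b => app (subst d N a) (subst d N b)
  | es a b => es (subst (S d) N a) (subst d N b)
  | bang a => bang (subst d N a)
  | der a => der (subst d N a)
  | bot => bot
  end.

(* List contexts L ::= [] | L[N/x].  plug L t = L<t>; the term t is placed
   under (length L) binders. *)
Fixpoint plug (L : list term) (t : term) : term :=
  match L with
  | [] => t
  | N :: L' => es (plug L' t) N
  end.

Inductive root_step : term -> term -> Prop :=
| rs_dB : forall L M N,
    root_step (app (plug L (lam M)) N) (plug L (es M (lift (length L) 0 N)))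
| rs_sB : forall M L N,
    root_step (es M (plug L (bang N)))
              (plug L (subst 0 N (lift (length L) 1 M)))
| rs_bang : forall L N,
    root_step (der (plug L (bang N))) (plug L N).

Inductive step : term -> term -> Prop :=
| st_root : forall a b, root_step a b -> step a b
| st_lam : forall a a', step a a' -> step (lam a) (lam a')
| st_appl : forall a a' b, step a a' -> step (app a b) (app a' b)
| st_appr : forall a b b', step b b' -> step (app a b) (app a b')
| st_esl : forall a a' b, step a a' -> step (es a b) (es a' b)
| st_esr : forall a b b', step b b' -> step (es a b) (es a b')
| st_bang : forall a a', step a a' -> step (bang a) (bang a')
| st_der : forall a a', step a a' -> step (der a) (der a').

Definition steps : term -> term -> Prop := clos_refl_trans term step.

Inductive approx_le : term -> term -> Prop :=
| le_bot : forall b, approx_le bot b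
| le_var : forall n, approx_le (var n) (var n)
| le_lam : forall a b, approx_le a b -> approx_le (lam a) (lam b)
| le_app : forall a1 a2 b1 b2, approx_le a1 b1 -> approx_le a2 b2 ->
    approx_le (app a1 a2) (app b1 b2)
| le_es : forall a1 a2 b1 b2, approx_le a1 b1 -> approx_le a2 b2 ->
    approx_le (es a1 a2) (es b1 b2)
| le_bang : forall a b, approx_le a b -> approx_le (bang a) (bang b)
| le_der : forall a b, approx_le a b -> approx_le (der a) (der b).

Inductive subterm : term -> term -> Prop :=
| sub_refl : forall t, subterm t t
| sub_lam : forall s a, subterm s a -> subterm s (lam a)
| sub_appl : forall s a b, subterm s a -> subterm s (app a b)
| sub_appr : forall s a b, subterm s b -> subterm s (app a b)
| sub_esl : forall s a b, subterm s a -> subterm s (es a b)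
| sub_esr : forall s a b, subterm s b -> subterm s (es a b)
| sub_bang : forall s a, subterm s a -> subterm s (bang a)
| sub_der : forall s a, subterm s a -> subterm s (der a).

Definition forbidden (s : term) : Prop :=
  (exists L A B, s = app (plug L (lam A)) B) \/
  (exists L B, s = app (plug L bot) B) \/
  (exists L A, s = der (plug L (bang A))) \/
  (exists L, s = der (plug L bot)) \/
  (exists A L B, s = es A (plug L (bang B))) \/
  (exists A L, s = es A (plug L bot)).

Definition approximant (A : term) : Prop :=
  forall s, subterm s A -> ~ forbidden s.

Definition approximants (M : term) (A : term) : Prop :=
  approximant A /\ exists N, steps M N /\ approx_le A N.

(* Main.v *)
From Stdlib Require Import Arith List Relations Lia.
Import ListNotations.
Require Import Defs.

Ltac dec := repeat (cbn [lift subst]; match goal with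
  | |- context [?a <=? ?b] => destruct (Nat.leb_spec a b)
  | |- context [?a =? ?b] => destruct (Nat.eqb_spec a b)
  | |- context [?a <? ?b] => destruct (Nat.ltb_spec a b) end);
  try (exfalso; lia); try (f_equal; lia).

Lemma lift_0 : forall t c, lift 0 c t = t.
Proof. induction t; intros; cbn [lift subst]; try (f_equal; auto; fail). dec. Qed.

Lemma lift_lift : forall t k j c c', c' <= c <= c' + j ->
  lift k c (lift j c' t) = lift (j+k) c' t.
Proof. induction t; intros; cbn [lift subst]; try (f_equal; auto; fail);
  try (f_equal; [apply IHt1; lia | apply IHt2; lia]);
  try (f_equal; apply IHt; lia). dec. Qed.

Lemma lift_lift_comm : forall t k j c c', c <= c' ->
  lift k c (lift j c' t) = lift j (c'+k) (lift k c t).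
Proof. induction t; intros; cbn [lift subst]; try (f_equal; auto; fail);
  try (f_equal; [apply (IHt1 k j (S c) (S c')); lia | apply IHt2; lia]);
  try (f_equal; apply (IHt k j (S c) (S c')); lia);
  try (f_equal; apply IHt; lia). dec. Qed.

Lemma subst_lift : forall t N j c d, c <= d <= c + j ->
  subst d N (lift (S j) c t) = lift j c t.
Proof. induction t; intros; cbn [lift subst]; try (f_equal; auto; fail);
  try (f_equal; [apply IHt1; lia | apply IHt2; lia]);
  try (f_equal; apply IHt; lia). dec. Qed.

Lemma lift_subst_lo : forall t N k c d, c <= d ->
  lift k c (subst d N t) = subst (d+k) N (lift k c t).
Proof. induction t; intros; cbn [lift subst]; try (f_equal; auto; fail);
  try (f_equal; [apply (IHt1 N k (S c) (S d)); lia | apply IHt2; lia]);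
  try (f_equal; apply (IHt N k (S c) (S d)); lia);
  try (f_equal; apply IHt; lia).
  dec. subst. rewrite lift_lift by lia. reflexivity. Qed.

Lemma lift_subst_hi : forall t N k c d, d <= c ->
  lift k c (subst d N t) = subst d (lift k (c-d) N) (lift k (S c) t).
Proof. induction t; intros; cbn [lift subst]; try (f_equal; auto; fail);
  try (f_equal; [apply (IHt1 N k (S c) (S d)); lia | apply IHt2; lia]);
  try (f_equal; apply (IHt N k (S c) (S d)); lia);
  try (f_equal; apply IHt; lia).
  dec. subst. rewrite (lift_lift_comm N d k 0 (c - d)) by lia.
  f_equal; lia. Qed.

Lemma subst_subst : forall t P Q c d, d <= c ->
  subst c P (subst d Q t) = subst d (subst (c-d) P Q) (subst (S c) P t).
Proof. induction t; intros; cbn [lift subst]; try (f_equal; auto; fail);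
  try (f_equal; [apply (IHt1 P Q (S c) (S d)); lia | apply IHt2; lia]);
  try (f_equal; apply (IHt P Q (S c) (S d)); lia);
  try (f_equal; apply IHt; lia).
  dec.
  - rewrite (lift_subst_lo Q P d 0 (c - d)) by lia. f_equal; lia.
  - subst. rewrite (subst_lift P _ c 0 d) by lia. reflexivity.
Qed.

Fixpoint liftL k c (L : list term) : list term :=
  match L with [] => [] | N :: L' => lift k c N :: liftL k (S c) L' end.
Fixpoint substL d P (L : list term) : list term :=
  match L with [] => [] | N :: L' => subst d P N :: substL (S d) P L' end.

Lemma length_liftL : forall L k c, length (liftL k c L) = length L.
Proof. induction L; simpl; auto. Qed.
Lemma length_substL : forall L d P, length (substL d P L) = length L.
Proof. induction L; simpl; auto. Qed.

Lemma lift_plug : forall L t k c,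
  lift k c (plug L t) = plug (liftL k c L) (lift k (c + length L) t).
Proof. induction L; intros; simpl. rewrite Nat.add_0_r; auto.
  rewrite IHL. do 3 f_equal. lia. Qed.
Lemma subst_plug : forall L t d P,
  subst d P (plug L t) = plug (substL d P L) (subst (d + length L) P t).
Proof. induction L; intros; simpl. rewrite Nat.add_0_r; auto.
  rewrite IHL. do 3 f_equal. lia. Qed.
Lemma plug_app : forall L1 L2 t, plug (L1 ++ L2) t = plug L1 (plug L2 t).
Proof. induction L1; intros; simpl; auto. rewrite IHL1; auto. Qed.

Inductive par : term -> term -> Prop :=
| p_var n : par (var n) (var n)
| p_bot : par bot bot
| p_lam a a' : par a a' -> par (lam a) (lam a')
| p_app a a' b b' : par a a' -> par b b' -> par (app a b) (app a' b')
| p_es a a' b b' : par a a' -> par b b' -> par (es a b) (es a' b')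
| p_bang a a' : par a a' -> par (bang a) (bang a')
| p_der a a' : par a a' -> par (der a) (der a')
| p_dB t s L M s' : par t (plug L (lam M)) -> par s s' ->
    par (app t s) (plug L (es M (lift (length L) 0 s')))
| p_sB t t' s L N : par t t' -> par s (plug L (bang N)) ->
    par (es t s) (plug L (subst 0 N (lift (length L) 1 t')))
| p_d t L N : par t (plug L (bang N)) -> par (der t) (plug L N).

Lemma par_conv : forall a b c, par a b -> b = c -> par a c.
Proof. intros; subst; auto. Qed.

Lemma par_refl : forall t, par t t.
Proof. induction t; constructor; auto. Qed.

Lemma par_lift : forall t t', par t t' -> forall k c, par (lift k c t) (lift k c t').
Proof.
  induction 1; intros; cbn [lift]; try (constructor; auto; fail).
  - destruct (c <=? n); constructor.
  - specialize (IHpar1 k c). rewrite lift_plug in IHpar1. cbn [lift] in IHpar1.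
    eapply par_conv. apply (p_dB _ _ _ _ _ IHpar1 (IHpar2 k c)).
    rewrite lift_plug, length_liftL. cbn [lift]. f_equal. f_equal.
    rewrite (lift_lift_comm s' (length L) k 0 c) by lia. reflexivity.
  - specialize (IHpar2 k c). rewrite lift_plug in IHpar2. cbn [lift] in IHpar2.
    eapply par_conv. apply (p_sB _ _ _ _ _ (IHpar1 k (S c)) IHpar2).
    rewrite lift_plug, length_liftL. f_equal.
    rewrite lift_subst_hi by lia. rewrite Nat.sub_0_r. f_equal.
    rewrite (lift_lift_comm t' (length L) k 1 (S c)) by lia. f_equal; lia.
  - specialize (IHpar k c). rewrite lift_plug in IHpar. cbn [lift] in IHpar.
    eapply par_conv. apply (p_d _ _ _ IHpar). rewrite lift_plug; auto.
Qed.

Lemma par_subst : forall t t', par t t' -> forall N N' d, par N N' ->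
  par (subst d N t) (subst d N' t').
Proof.
  induction 1; intros NN NN' d HN; cbn [subst]; try (constructor; auto; fail).
  - destruct (n =? d). apply par_lift; auto. destruct (d <? n); constructor.
  - specialize (IHpar1 NN NN' d HN). rewrite subst_plug in IHpar1. cbn [subst] in IHpar1.
    eapply par_conv. apply (p_dB _ _ _ _ _ IHpar1 (IHpar2 NN NN' d HN)).
    rewrite subst_plug, length_substL. cbn [subst]. f_equal. f_equal.
    rewrite (lift_subst_lo s' NN' (length L) 0 d) by lia. reflexivity.
  - specialize (IHpar2 NN NN' d HN). rewrite subst_plug in IHpar2. cbn [subst] in IHpar2.
    eapply par_conv. apply (p_sB _ _ _ _ _ (IHpar1 NN NN' (S d) HN) IHpar2).
    rewrite subst_plug, length_substL. f_equal.
    rewrite subst_subst by lia. rewrite Nat.sub_0_r. f_equal.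
    rewrite (lift_subst_lo t' NN' (length L) 1 (S d)) by lia. f_equal; lia.
  - specialize (IHpar NN NN' d HN). rewrite subst_plug in IHpar. cbn [subst] in IHpar.
    eapply par_conv. apply (p_d _ _ _ IHpar). rewrite subst_plug; auto.
Qed.

Lemma shape_lam : forall L M u, par (plug L (lam M)) u ->
  exists L2 M2, u = plug L2 (lam M2) /\ forall N N2, par N N2 ->
   par (plug L (es M (lift (length L) 0 N))) (plug L2 (es M2 (lift (length L2) 0 N2))).
Proof.
  induction L as [|x L IH]; intros M u H; simpl in H.
  - inversion H; subst. exists [], a'. split; auto. intros. simpl.
    constructor; auto. apply par_lift; auto.
  - inversion H; subst.
    + destruct (IH _ _ H2) as [L3 [M3 [E3 H3]]]. subst.
      exists (b' :: L3), M3. split; auto. intros Y Y2 HN. simpl.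
      constructor; auto.
      specialize (H3 _ _ (par_lift _ _ HN 1 0)).
      rewrite !lift_lift in H3 by lia. exact H3.
    + destruct (IH _ _ H2) as [L3 [M3 [E3 H3]]]. subst.
      rewrite lift_plug, subst_plug, <- plug_app. cbn [lift subst].
      eexists; eexists; split. reflexivity. intros Y Y2 HN. simpl.
      specialize (H3 _ _ (par_lift _ _ HN 1 0)).
      rewrite !lift_lift in H3 by lia.
      eapply par_conv. apply (p_sB _ _ _ _ _ H3 H4).
      rewrite lift_plug, subst_plug, <- plug_app. cbn [lift subst].
      rewrite length_app, length_substL, length_liftL.
      f_equal. f_equal. f_equal; try (f_equal; lia).
      rewrite lift_lift by lia. replace (1 + length L3 + length L0) with (S (length L3 + length L0)) by lia. rewrite subst_lift by lia. f_equal; lia.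
Qed.

Lemma shape_bang : forall L N u, par (plug L (bang N)) u ->
  exists L2 N2, u = plug L2 (bang N2) /\ forall X X2, par X X2 ->
   par (plug L (subst 0 N (lift (length L) 1 X))) (plug L2 (subst 0 N2 (lift (length L2) 1 X2))).
Proof.
  induction L as [|x L IH]; intros N u H; simpl in H.
  - inversion H; subst. exists [], a'. split; auto. intros. simpl.
    rewrite !lift_0. apply par_subst; auto.
  - inversion H; subst.
    + destruct (IH _ _ H2) as [L3 [N3 [E3 H3]]]. subst.
      exists (b' :: L3), N3. split; auto. intros X X2 HX. simpl.
      constructor; auto.
      specialize (H3 _ _ (par_lift _ _ HX 1 1)).
      rewrite !lift_lift in H3 by lia. exact H3.
    + destruct (IH _ _ H2) as [L3 [N3 [E3 H3]]]. subst.
      rewrite lift_plug, subst_plug, <- plug_app. cbn [lift subst].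
      eexists; eexists; split. reflexivity. intros X X2 HX. simpl.
      specialize (H3 _ _ (par_lift _ _ HX 1 1)).
      rewrite !lift_lift in H3 by lia.
      eapply par_conv. apply (p_sB _ _ _ _ _ H3 H4).
      rewrite lift_plug, subst_plug, <- plug_app.
      rewrite length_app, length_substL, length_liftL.
      f_equal.
      rewrite lift_subst_hi by lia. rewrite subst_subst by lia.
      rewrite !Nat.sub_0_r. simpl. f_equal.
      rewrite lift_lift by lia.
      replace (S (length L3) + length L0) with (S (length L3 + length L0)) by lia.
      rewrite subst_lift by lia. f_equal; lia.
Qed.

Lemma shape_der : forall L N L2 N2, par (plug L (bang N)) (plug L2 (bang N2)) ->
  par (plug L N) (plug L2 N2).
Proof.
  intros. destruct (shape_bang _ _ _ H) as [L3 [N3 [E H3]]].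
  assert (U: L2 = L3 /\ N2 = N3).
  { clear - E. revert L3 E; induction L2; destruct L3; simpl; intros E; try discriminate.
    inversion E; auto. inversion E. destruct (IHL2 _ H0). subst; auto. }
  destruct U; subst.
  specialize (H3 _ _ (p_var 0)). cbn [lift subst] in H3.
  simpl in H3. rewrite !lift_0 in H3. exact H3.
Qed.

Fixpoint dec_lam (t : term) : option (list term * term) :=
  match t with
  | lam M => Some ([], M)
  | es a b => match dec_lam a with Some (L, M) => Some (b :: L, M) | None => None end
  | _ => None end.
Fixpoint dec_bang (t : term) : option (list term * term) :=
  match t with
  | bang M => Some ([], M)
  | es a b => match dec_bang a with Some (L, M) => Some (b :: L, M) | None => None end
  | _ => None end.

Lemma dec_lam_plug : forall L M, dec_lam (plug L (lam M)) = Some (L, M).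
Proof. induction L; intros; simpl; auto. rewrite IHL; auto. Qed.
Lemma dec_bang_plug : forall L M, dec_bang (plug L (bang M)) = Some (L, M).
Proof. induction L; intros; simpl; auto. rewrite IHL; auto. Qed.
Lemma dec_lam_some : forall t L M, dec_lam t = Some (L, M) -> t = plug L (lam M).
Proof. induction t; simpl; intros; try discriminate.
  inversion H; auto.
  destruct (dec_lam t1) as [[L1 M1]|] eqn:E; try discriminate.
  inversion H; subst. simpl. rewrite (IHt1 _ _ eq_refl). auto. Qed.
Lemma dec_bang_some : forall t L M, dec_bang t = Some (L, M) -> t = plug L (bang M).
Proof. induction t; simpl; intros; try discriminate.
  destruct (dec_bang t1) as [[L1 M1]|] eqn:E; try discriminate.
  inversion H; subst. simpl. rewrite (IHt1 _ _ eq_refl). auto.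
  inversion H; auto. Qed.

Fixpoint dev (t : term) : term :=
  match t with
  | var n => var n
  | bot => bot
  | lam a => lam (dev a)
  | bang a => bang (dev a)
  | app a b => match dec_lam (dev a) with
      | Some (L, M) => plug L (es M (lift (length L) 0 (dev b)))
      | None => app (dev a) (dev b) end
  | es a b => match dec_bang (dev b) with
      | Some (L, N) => plug L (subst 0 N (lift (length L) 1 (dev a)))
      | None => es (dev a) (dev b) end
  | der a => match dec_bang (dev a) with
      | Some (L, N) => plug L N
      | None => der (dev a) end
  end.

Lemma triangle : forall t u, par t u -> par u (dev t).
Proof.
  induction 1; simpl; try (constructor; auto; fail).
  - destruct (dec_lam (dev a)) as [[L M]|] eqn:E.
    + apply dec_lam_some in E. rewrite E in IHpar1. apply p_dB; auto.
    + constructor; auto.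
  - destruct (dec_bang (dev b)) as [[L M]|] eqn:E.
    + apply dec_bang_some in E. rewrite E in IHpar2. apply p_sB; auto.
    + constructor; auto.
  - destruct (dec_bang (dev a)) as [[L M]|] eqn:E.
    + apply dec_bang_some in E. rewrite E in IHpar. apply p_d; auto.
    + constructor; auto.
  - destruct (shape_lam _ _ _ IHpar1) as [L2 [M2 [E H2]]].
    rewrite E, dec_lam_plug. apply H2; auto.
  - destruct (shape_bang _ _ _ IHpar2) as [L2 [N2 [E H2]]].
    rewrite E, dec_bang_plug. apply H2; auto.
  - destruct (shape_bang _ _ _ IHpar) as [L2 [N2 [E H2]]].
    rewrite E, dec_bang_plug.
    rewrite E in IHpar. apply shape_der; auto.
Qed.

Inductive star : term -> term -> Prop :=
| star_refl t : star t t
| star_step t u v : par t u -> star u v -> star t v.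

Lemma star_trans : forall a b c, star a b -> star b c -> star a c.
Proof. induction 1; intros; auto. econstructor; eauto. Qed.

Lemma strip : forall t v, star t v -> forall u, par t u ->
  exists w, star u w /\ par v w.
Proof.
  induction 1; intros.
  - exists u; split; [constructor | auto].
  - destruct (IHstar (dev t)) as [w [H2 H3]]. apply triangle; auto.
    exists w; split; auto. econstructor. apply triangle; eauto. auto.
Qed.

Lemma star_confl : forall t u, star t u -> forall v, star t v ->
  exists w, star u w /\ star v w.
Proof.
  induction 1; intros.
  - match goal with |- exists w, star ?a w /\ star ?b w => exists b; split; auto; constructor end.
  - destruct (strip _ _ H1 _ H) as [w1 [H2 H3]].
    destruct (IHstar _ H2) as [w [H4 H5]].
    exists w; split; auto. econstructor; eauto.
Qed.

Lemma steps_lam : forall a a', steps a a' -> steps (lam a) (lam a').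
Proof. induction 1; [apply rt_step; eauto using step | apply rt_refl | eapply rt_trans; eauto]. Qed.
Lemma steps_bang : forall a a', steps a a' -> steps (bang a) (bang a').
Proof. induction 1; [apply rt_step; eauto using step | apply rt_refl | eapply rt_trans; eauto]. Qed.
Lemma steps_der : forall a a', steps a a' -> steps (der a) (der a').
Proof. induction 1; [apply rt_step; eauto using step | apply rt_refl | eapply rt_trans; eauto]. Qed.
Lemma steps_appl : forall a a' b, steps a a' -> steps (app a b) (app a' b).
Proof. induction 1; [apply rt_step; eauto using step | apply rt_refl | eapply rt_trans; eauto]. Qed.
Lemma steps_appr : forall a b b', steps b b' -> steps (app a b) (app a b').
Proof. induction 1; [apply rt_step; eauto using step | apply rt_refl | eapply rt_trans; eauto]. Qed.
Lemma steps_esl : forall a a' b, steps a a' -> steps (es a b) (es a' b).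
Proof. induction 1; [apply rt_step; eauto using step | apply rt_refl | eapply rt_trans; eauto]. Qed.
Lemma steps_esr : forall a b b', steps b b' -> steps (es a b) (es a b').
Proof. induction 1; [apply rt_step; eauto using step | apply rt_refl | eapply rt_trans; eauto]. Qed.

Lemma par_steps : forall t u, par t u -> steps t u.
Proof.
  induction 1.
  - apply rt_refl.
  - apply rt_refl.
  - apply steps_lam; auto.
  - eapply rt_trans; [apply steps_appl; eauto | apply steps_appr; eauto].
  - eapply rt_trans; [apply steps_esl; eauto | apply steps_esr; eauto].
  - apply steps_bang; auto.
  - apply steps_der; auto.
  - eapply rt_trans; [apply steps_appl; eauto |].
    eapply rt_trans; [apply steps_appr; eauto |].
    apply rt_step, st_root, rs_dB.
  - eapply rt_trans; [apply steps_esl; eauto |].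
    eapply rt_trans; [apply steps_esr; eauto |].
    apply rt_step, st_root, rs_sB.
  - eapply rt_trans; [apply steps_der; eauto |].
    apply rt_step, st_root, rs_bang.
Qed.

Lemma step_par : forall t u, step t u -> par t u.
Proof.
  induction 1; try (constructor; auto using par_refl; fail).
  destruct H.
  - apply p_dB; apply par_refl.
  - apply p_sB; apply par_refl.
  - apply p_d; apply par_refl.
Qed.

Lemma steps_star : forall t u, steps t u -> star t u.
Proof.
  induction 1. econstructor. apply step_par; eauto. constructor.
  constructor. eapply star_trans; eauto.
Qed.
Lemma star_steps : forall t u, star t u -> steps t u.
Proof. induction 1. apply rt_refl. eapply rt_trans. apply par_steps; eauto. auto. Qed.

Lemma confluence : forall t u v, steps t u -> steps t v ->
  exists w, steps u w /\ steps v w.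
Proof.
  intros. destruct (star_confl _ _ (steps_star _ _ H) _ (steps_star _ _ H0)) as [w [? ?]].
  exists w; split; apply star_steps; auto.
Qed.

Definition PL x := exists L, x = plug L bot \/ exists M, x = plug L (lam M).
Definition PB x := exists L, x = plug L bot \/ exists M, x = plug L (bang M).

Lemma plug_nonES : forall L t x, plug L t = x -> (forall a b, x <> es a b) -> L = [] /\ t = x.
Proof. destruct L; simpl; intros. auto. exfalso; eapply H0; eauto. Qed.

Lemma PL_es : forall a b, PL a -> PL (es a b).
Proof. intros a b [L [H|[M H]]]; exists (b :: L); subst; simpl; auto. right; eauto. Qed.
Lemma PB_es : forall a b, PB a -> PB (es a b).
Proof. intros a b [L [H|[M H]]]; exists (b :: L); subst; simpl; auto. right; eauto. Qed.
Lemma PL_es_inv : forall a b, PL (es a b) -> PL a.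
Proof. intros a b [[|x L] [H|[M H]]]; simpl in H; try discriminate; inversion H; subst;
  exists L; auto. right; eauto. Qed.
Lemma PB_es_inv : forall a b, PB (es a b) -> PB a.
Proof. intros a b [[|x L] [H|[M H]]]; simpl in H; try discriminate; inversion H; subst;
  exists L; auto. right; eauto. Qed.

Ltac noPL := let L := fresh in let H := fresh in let M := fresh in
  intros [L [H|[M H]]]; destruct L; simpl in H; discriminate.

Lemma forb_app : forall x y, forbidden (app x y) -> PL x.
Proof. intros x y [[L [A [B H]]]|[[L [B H]]|[[L [A H]]|[[L H]|[[A [L [B H]]]|[A [L H]]]]]]];
  inversion H; subst; try (exists L; auto; fail). exists L; right; eauto. Qed.
Lemma forb_der : forall x, forbidden (der x) -> PB x.
Proof. intros x [[L [A [B H]]]|[[L [B H]]|[[L [A H]]|[[L H]|[[A [L [B H]]]|[A [L H]]]]]]];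
  inversion H; subst; try (exists L; auto; fail). exists L; right; eauto. Qed.
Lemma forb_es : forall x y, forbidden (es y x) -> PB x.
Proof. intros x y [[L [A [B H]]]|[[L [B H]]|[[L [A H]]|[[L H]|[[A [L [B H]]]|[A [L H]]]]]]];
  inversion H; subst; try (exists L; auto; fail). exists L; right; eauto. Qed.
Lemma forb_lam : forall a, ~ forbidden (lam a).
Proof. intros a [[L [A [B H]]]|[[L [B H]]|[[L [A H]]|[[L H]|[[A [L [B H]]]|[A [L H]]]]]]]; discriminate. Qed.
Lemma forb_bang : forall a, ~ forbidden (bang a).
Proof. intros a [[L [A [B H]]]|[[L [B H]]|[[L [A H]]|[[L H]|[[A [L [B H]]]|[A [L H]]]]]]]; discriminate. Qed.
Lemma forb_var : forall a, ~ forbidden (var a).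
Proof. intros a [[L [A [B H]]]|[[L [B H]]|[[L [A H]]|[[L H]|[[A [L [B H]]]|[A [L H]]]]]]]; discriminate. Qed.
Lemma forb_bot : ~ forbidden bot.
Proof. intros [[L [A [B H]]]|[[L [B H]]|[[L [A H]]|[[L H]|[[A [L [B H]]]|[A [L H]]]]]]]; discriminate. Qed.

Lemma PL_forb : forall x y, PL x -> forbidden (app x y).
Proof. intros x y [L [H|[M H]]]; subst. right; left; eauto. left; eauto. Qed.
Lemma PB_forb_der : forall x, PB x -> forbidden (der x).
Proof. intros x [L [H|[M H]]]; subst. right; right; right; left; eauto. right; right; left; eauto. Qed.
Lemma PB_forb_es : forall x y, PB x -> forbidden (es y x).
Proof. intros x y [L [H|[M H]]]; subst. right; right; right; right; right; eauto.
  right; right; right; right; left; eauto. Qed.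

Lemma subterm_trans : forall a b c, subterm a b -> subterm b c -> subterm a c.
Proof. intros a b c H1 H2; induction H2; eauto using subterm. Qed.

Lemma appr_sub : forall t s, approximant t -> subterm s t -> approximant s.
Proof. unfold approximant; intros. apply H. eapply subterm_trans; eauto. Qed.

Ltac appr_inv H := let s := fresh in let Hs := fresh in
  intros s Hs; inversion Hs; subst; auto.

Lemma appr_app : forall a b, approximant a -> approximant b -> ~ PL a -> approximant (app a b).
Proof. intros a b Ha Hb Hn s Hs; inversion Hs; subst; auto.
  intro F; apply Hn; eapply forb_app; eauto. Qed.
Lemma appr_es : forall a b, approximant a -> approximant b -> ~ PB b -> approximant (es a b).
Proof. intros a b Ha Hb Hn s Hs; inversion Hs; subst; auto.
  intro F; apply Hn; eapply forb_es; eauto. Qed.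
Lemma appr_der : forall a, approximant a -> ~ PB a -> approximant (der a).
Proof. intros a Ha Hn s Hs; inversion Hs; subst; auto.
  intro F; apply Hn; eapply forb_der; eauto. Qed.
Lemma appr_lam : forall a, approximant a -> approximant (lam a).
Proof. intros a Ha s Hs; inversion Hs; subst; auto. apply forb_lam. Qed.
Lemma appr_bang : forall a, approximant a -> approximant (bang a).
Proof. intros a Ha s Hs; inversion Hs; subst; auto. apply forb_bang. Qed.

Lemma le_PL : forall L M A, approx_le A (plug L (lam M)) -> PL A.
Proof. induction L; simpl; intros M A H; inversion H; subst;
  first [exists []; left; reflexivity | exists []; right; eexists; reflexivity | apply PL_es; eauto]. Qed.
Lemma le_PB : forall L M A, approx_le A (plug L (bang M)) -> PB A.
Proof. induction L; simpl; intros M A H; inversion H; subst;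
  first [exists []; left; reflexivity | exists []; right; eexists; reflexivity | apply PB_es; eauto]. Qed.

Lemma stable_step : forall N N', step N N' -> forall A, approximant A ->
  approx_le A N -> approx_le A N'.
Proof.
  induction 1; intros A HA HL.
  1: { destruct H; inversion HL; subst; try apply le_bot; exfalso; apply (HA _ (sub_refl _));
      first [apply PL_forb; eapply le_PL; eauto | apply PB_forb_es; eapply le_PB; eauto
            | apply PB_forb_der; eapply le_PB; eauto]. }
  all: inversion HL; subst; try apply le_bot; constructor; auto;
    apply IHstep; auto; eapply appr_sub; eauto using subterm.
Qed.

Lemma stable_steps : forall N N', steps N N' -> forall A, approximant A ->
  approx_le A N -> approx_le A N'.
Proof. induction 1; intros; eauto using stable_step. Qed.

Lemma le_refl : forall t, approx_le t t.
Proof. induction t; constructor; auto. Qed.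
Lemma le_trans : forall a b c, approx_le a b -> approx_le b c -> approx_le a c.
Proof. intros a b c H; revert c; induction H; intros c Hc; inversion Hc; subst;
  constructor; auto. Qed.

Fixpoint join (a b : term) : term :=
  match a, b with
  | bot, _ => b
  | _, bot => a
  | lam a1, lam b1 => lam (join a1 b1)
  | app a1 a2, app b1 b2 => app (join a1 b1) (join a2 b2)
  | es a1 a2, es b1 b2 => es (join a1 b1) (join a2 b2)
  | bang a1, bang b1 => bang (join a1 b1)
  | der a1, der b1 => der (join a1 b1)
  | _, _ => a
  end.

Lemma join_le : forall a n, approx_le a n -> forall b, approx_le b n ->
  approx_le a (join a b) /\ approx_le b (join a b) /\ approx_le (join a b) n.
Proof.
  induction 1; intros bb Hb; inversion Hb; subst; simpl;
    repeat split; try constructor; try apply le_refl; auto;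
    repeat match goal with
    | IH : forall b, approx_le b ?n -> _, H : approx_le ?x ?n |- _ =>
        destruct (IH _ H) as [? [? ?]]; clear IH
    end; auto.
Qed.

Lemma join_PL : forall a b, PL (join a b) -> PL a \/ PL b.
Proof.
  induction a; destruct b; simpl; intros H; auto;
    try (left; exact H); try (right; exact H);
    try (left; exists []; right; eexists; reflexivity);
    try (exfalso; revert H; noPL).
  match goal with IH : forall b, PL (join ?x b) -> _, H : PL (es (join ?x ?y) _) |- _ =>
    destruct (IH y (PL_es_inv _ _ H)); [left|right]; apply PL_es; auto end.
Qed.
Lemma join_PB : forall a b, PB (join a b) -> PB a \/ PB b.
Proof.
  induction a; destruct b; simpl; intros H; auto;
    try (left; exact H); try (right; exact H);
    try (left; exists []; right; eexists; reflexivity);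
    try (exfalso; revert H; noPL).
  match goal with IH : forall b, PB (join ?x b) -> _, H : PB (es (join ?x ?y) _) |- _ =>
    destruct (IH y (PB_es_inv _ _ H)); [left|right]; apply PB_es; auto end.
Qed.
Ltac sub_of H := eapply appr_sub; [exact H | eauto using subterm].
Lemma join_appr : forall a b, approximant a -> approximant b -> approximant (join a b).
Proof.
  induction a; destruct b; simpl; intros Ha Hb; auto.
  - apply appr_lam. apply IHa; [sub_of Ha | sub_of Hb].
  - apply appr_app. apply IHa1; [sub_of Ha | sub_of Hb].
    apply IHa2; [sub_of Ha | sub_of Hb].
    intros H. destruct (join_PL _ _ H).
    apply (Ha _ (sub_refl _)), PL_forb; auto.
    apply (Hb _ (sub_refl _)), PL_forb; auto.
  - apply appr_es. apply IHa1; [sub_of Ha | sub_of Hb].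
    apply IHa2; [sub_of Ha | sub_of Hb].
    intros H. destruct (join_PB _ _ H).
    apply (Ha _ (sub_refl _)), PB_forb_es; auto.
    apply (Hb _ (sub_refl _)), PB_forb_es; auto.
  - apply appr_bang. apply IHa; [sub_of Ha | sub_of Hb].
  - apply appr_der. apply IHa; [sub_of Ha | sub_of Hb].
    intros H. destruct (join_PB _ _ H).
    apply (Ha _ (sub_refl _)), PB_forb_der; auto.
    apply (Hb _ (sub_refl _)), PB_forb_der; auto.
Qed.

Theorem mainTheorem2 (M : term) (HM : bot_free M) :
  (forall A B, approximant A -> approx_le A B -> approximants M B ->
     approximants M A) /\
  (forall A1 A2, approximants M A1 -> approximants M A2 ->
     exists A3, approximants M A3 /\ approx_le A1 A3 /\ approx_le A2 A3).
Proof.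
  split.
  - intros A B HA HAB [HB [N [HMN HBN]]]. split; auto. exists N; split; auto.
    eapply le_trans; eauto.
  - intros A1 A2 [H1 [N1 [HM1 HL1]]] [H2 [N2 [HM2 HL2]]].
    destruct (confluence _ _ _ HM1 HM2) as [N3 [H13 H23]].
    pose proof (stable_steps _ _ H13 _ H1 HL1) as K1.
    pose proof (stable_steps _ _ H23 _ H2 HL2) as K2.
    destruct (join_le _ _ K1 _ K2) as [J1 [J2 J3]].
    exists (join A1 A2). split; [|split; auto].
    split. apply join_appr; auto.
    exists N3; split; auto. eapply rt_trans; eauto.
Qed.
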